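(* Let $B(x,y)=\sum_{n,k\ge0}B_{n,k}x^ny^k$ be the generating function of the Borel triangle $B_{n,k}=\frac{1}{n+1}\binom{2n+2}{n-k}\binom{n+k}{k}$, and let $c(x)=\frac{1-\sqrt{1-4x}}{2x}=\sum_{n\ge0}\frac{1}{n+1}\binom{2n}{n}x^n$ be the Catalan generating function. Then $$B(x,y)=\frac{1}{1-2x}\,c\!\left(\frac{x(x+y)}{(1-2x)^2}\right).$$
   Context: All identities are identities of formal power series in $x$ with coefficients polynomials in $y$. *)

(* Defs.v *)
(* Formal power series in x with coefficients in Q[y],
   represented by their coefficient sequences nat -> {poly rat}. *)
From HB Require Import structures.
From mathcomp Require Import all_boot all_order all_algebra.
Set Implicit Arguments. Unset Strict Implicit. Unset Printing Implicit Defensive.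
Import Order.TTheory GRing.Theory Num.Theory.
Local Open Scope ring_scope.

Definition fps := nat -> {poly rat}.

Definition fps_one : fps := fun n => if n == 0%N then 1 else 0.
Definition fps_x : fps := fun n => if n == 1%N then 1 else 0.
Definition fps_y : fps := fun n => if n == 0%N then 'X else 0.
Definition fps_add (f g : fps) : fps := fun n => f n + g n.
Definition fps_scale (c : rat) (f : fps) : fps := fun n => c%:P * f n.
Definition fps_mul (f g : fps) : fps :=
  fun n => \sum_(i < n.+1) f i * g (n - i)%N.
Fixpoint fps_pow (f : fps) (m : nat) : fps :=
  if m is m'.+1 then fps_mul f (fps_pow f m') else fps_one.

(* Composition a(F) = \sum_m a_m F^m of a univariate series with
   coefficients a : nat -> rat with a series F having F 0 = 0;
   since F has no constant term, F^m contributes only to degrees >= m,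
   so the n-th coefficient is the finite sum over m <= n. *)
Definition fps_comp (a : nat -> rat) (F : fps) : fps :=
  fun n => \sum_(m < n.+1) (a m)%:P * fps_pow F m n.

(* 1/(1-u) = \sum_m u^m for u without constant term *)
Definition fps_geom (u : fps) : fps := fps_comp (fun _ => 1) u.

Definition catalan (n : nat) : rat := (n.+1%:R)^-1 * ('C(n.*2, n))%:R.

(* Borel triangle B_{n,k} = 1/(n+1) binom(2n+2, n-k) binom(n+k, k),
   which is 0 when k > n (binomial with negative lower index). *)
Definition borel (n k : nat) : rat :=
  if (k <= n)%N then (n.+1%:R)^-1 * ('C(n.*2.+2, n - k))%:R * ('C(n + k, k))%:R
  else 0.

Definition borel_gf : fps := fun n => \sum_(k < n.+1) (borel n k)%:P * 'X^k.

(* Main.v *)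
Require Import Defs.
From HB Require Import structures.
From mathcomp Require Import all_boot all_order all_algebra.
From mathcomp Require Import zify ring lra.
Set Implicit Arguments. Unset Strict Implicit. Unset Printing Implicit Defensive.
Import Order.TTheory GRing.Theory Num.Theory.
Local Open Scope ring_scope.

Lemma hockey j r : (\sum_(i < r.+1) 'C(j + i, j) = 'C(j.+1 + r, j.+1))%N.
Proof.
elim: r => [|r IH]; first by rewrite big_ord1 !addn0 !binn.
by rewrite big_ord_recr /= IH addnS binS addSn addnS.
Qed.

Lemma sum_delta (R : nmodType) n i (F : nat -> R) :
  \sum_(j < n) (if (j : nat) == i then F j else 0) = if (i < n)%N then F i else 0.
Proof. by rewrite -big_mkcond big_ord1_eq. Qed.

Section Geo.
Variable R : comNzRingType.

Definition geoP (c : R) N : {poly R} := \sum_(i < N.+1) (c%:P * 'X) ^+ i.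

Lemma geoP_coef c N r : (r <= N)%N -> (geoP c N)`_r = c ^+ r.
Proof.
move=> hr; rewrite /geoP coef_sum.
under eq_bigr => i _ do rewrite exprMn -polyC_exp coefCM coefXn mulr_natr mulrb.
rewrite (eq_bigr (fun i : 'I_N.+1 => if (i : nat) == r then c ^+ i else 0)).
  by rewrite sum_delta ltnS hr.
by move=> i _; rewrite eq_sym.
Qed.

Lemma geoP_pow_coef c N j r : (r <= N)%N ->
  ((geoP c N) ^+ j.+1)`_r = c ^+ r *+ 'C(j + r, j).
Proof.
elim: j r => [|j IH] r hr.
  by rewrite expr1 geoP_coef // add0n bin0.
rewrite exprS coefM.
rewrite (eq_bigr (fun i : 'I_r.+1 => c ^+ r *+ 'C(j + (r - i), j))); last first.
  move=> i _; have hi := ltn_ord i.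
  rewrite geoP_coef; last by lia.
  rewrite IH; last by lia.
  by rewrite mulrnAr -exprD subnKC //; lia.
rewrite sumrMnr (reindex_inj rev_ord_inj) /=.
rewrite (eq_bigr (fun i : 'I_r.+1 => 'C(j + i, j))); last first.
  by move=> i _; rewrite subSS subKn //; have := ltn_ord i; lia.
by rewrite hockey addSn.
Qed.

End Geo.

Lemma XaddC_coef (R : comNzRingType) (c : R) a t :
  (('X + c%:P) ^+ a)`_t = c ^+ (a - t) *+ 'C(a, t).
Proof.
rewrite addrC exprDn coef_sum.
under eq_bigr => i _ do rewrite coefMn -polyC_exp coefCM coefXn mulr_natr mulrb.
rewrite (eq_bigr (fun i : 'I_a.+1 => if (i : nat) == t then c ^+ (a - i) *+ 'C(a, i) else 0)).
  rewrite (sum_delta _ _ (fun j => c ^+ (a - j) *+ 'C(a, j))) ltnS; case: leqP => // hta.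
  by rewrite bin_small.
by move=> i _; rewrite eq_sym; case: (_ == _); rewrite ?mul0rn.
Qed.
Lemma fact_neq0 a : (a`!)%:R != 0 :> rat.
Proof. by rewrite pnatr_eq0 -lt0n fact_gt0. Qed.

Lemma succ_neq0 a : (a.+1)%:R != 0 :> rat.
Proof. by rewrite pnatr_eq0. Qed.

Lemma binR a b c : a = (b + c)%N ->
  ('C(a, b))%:R = (a`!)%:R / ((b`!)%:R * (c`!)%:R) :> rat.
Proof.
move=> h.
have hb : (b <= a)%N by lia.
have hc : c = (a - b)%N by lia.
rewrite -(bin_fact hb) hc !natrM mulfK //.
by rewrite mulf_neq0 // fact_neq0.
Qed.

Lemma term_id n m k : (k <= m)%N -> (m - k <= n - m)%N -> (m <= n)%N ->
  (n.+1%:R)^-1 * ((2:rat) ^+ (n - m - (m - k)) *+ 'C(n - m, m - k) *+ 'C(n.+1, m.+1))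
    * ('C(n + k, k))%:R
  = (m.+1%:R)^-1 * ('C(m.*2, m))%:R *
    ((2:rat) ^+ (n - m - (m - k)) *+ 'C(m + m + (n - m - (m - k)), m + m) *+ 'C(m, k)).
Proof.
move=> h1 h2 h3.
set e := (n - m - (m - k))%N.
have -> : (m + m + e = n + k)%N by rewrite /e; lia.
rewrite -addnn.
rewrite -[(2:rat) ^+ e *+ 'C(n - m, m - k)]mulr_natr -[(2:rat) ^+ e *+ 'C(n + k, m + m)]mulr_natr.
rewrite -[_ * _ *+ 'C(n.+1, m.+1)]mulr_natr -[_ * _ *+ 'C(m, k)]mulr_natr.
rewrite (binR (c := e)) //; last by rewrite /e; lia.
rewrite (binR (a := n.+1) (c := (n - m)%N)) //; last by lia.
rewrite (binR (a := (n + k)%N) (b := k) (c := n)) //; last by lia.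
rewrite (binR (a := (m + m)%N) (b := m) (c := m)) //.
rewrite (binR (a := (n + k)%N) (b := (m + m)%N) (c := e)) //; last by rewrite /e; lia.
rewrite (binR (a := m) (b := k) (c := (m - k)%N)) //; last by lia.
rewrite !factS !natrM.
move: (fact_neq0 n) (fact_neq0 m) (fact_neq0 e) (fact_neq0 k) (fact_neq0 (m - k))
  (fact_neq0 (n - m)) (fact_neq0 (m + m)) (fact_neq0 (n + k)) (succ_neq0 n) (succ_neq0 m).
move: (n`!%:R : rat) (m`!%:R : rat) (e`!%:R : rat) (k`!%:R : rat) ((m - k)`!%:R : rat)
  ((n - m)`!%:R : rat) ((m + m)`!%:R : rat) ((n + k)`!%:R : rat) (n.+1%:R : rat) (m.+1%:R : rat) ((2:rat) ^+ e).
move=> a1 a2 a3 a4 a5 a6 a7 a8 a9 a10 t h1' h2' h3' h4' h5' h6' h7' h8' h9' h10'.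
by field; rewrite ?(h1', h2', h3', h4', h5', h6', h7', h8', h9', h10').
Qed.

Lemma trinom n k : ('C((n.+1).*2, n - k))%:R = \sum_(m < n.+1)
   ((if (n - k < n - m)%N then 0 else (2:rat) ^+ ((n - m) - (n - k - (n - m))) *+
        'C(n - m, n - k - (n - m))) *+ 'C(n.+1, m.+1)) :> rat.
Proof.
have E : forall N t, ('C(N, t))%:R = (('X + (1:rat)%:P) ^+ N)`_t.
  by move=> N t; rewrite XaddC_coef expr1n.
rewrite E -mul2n exprM.
have -> : ('X + (1:rat)%:P) ^+ 2 = 'X * ('X + (2:rat)%:P) + 1.
  by rewrite polyC1 polyC_natr; ring.
rewrite exprDn big_ord_recl /= coefD coefMn subn0 expr1n mulr1 exprMn coefXnM.
have -> : (n - k < n.+1)%N by lia.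
rewrite mul0rn add0r coef_sum; apply: eq_bigr => m _.
by rewrite coefMn expr1n mulr1 subSS exprMn coefXnM XaddC_coef.
Qed.

Lemma borel_id n k : borel n k = \sum_(m < n.+1) catalan m *
  (if (k <= m)%N then (if (n - m < m - k)%N then 0 else (2:rat) ^+ (n - m - (m - k)) *+
     'C(m + m + (n - m - (m - k)), m + m)) *+ 'C(m, k) else 0).
Proof.
rewrite /borel; case: (leqP k n) => hk; last first.
  rewrite big1 // => m _; have hm := ltn_ord m.
  have -> : (k <= m)%N = false by lia.
  by rewrite /= mulr0.
rewrite -doubleS trinom mulr_sumr mulr_suml; apply: eq_bigr => m _.
have hm := ltn_ord m.
case: (leqP k m) => hkm; last first.
  have -> : (n - k < n - m)%N = true by lia.
  by rewrite /= !mul0rn mulr0 mul0r mulr0.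
have -> : (n - k < n - m)%N = false by lia.
have -> : (n - k - (n - m) = m - k)%N by lia.
case: (ltnP (n - m) (m - k)) => h2.
  by rewrite bin_small // !mulr0n !mul0rn mulr0 mul0r mulr0.
rewrite /catalan; apply: term_id => //; lia.
Qed.
Definition agree (N : nat) (f : fps) (p : {poly {poly rat}}) :=
  forall i, (i <= N)%N -> f i = p`_i.

Lemma agree_one N : agree N fps_one 1.
Proof. by move=> i _; rewrite /fps_one coef1; case: (i == 0%N). Qed.

Lemma agree_x N : agree N fps_x 'X.
Proof. by move=> i _; rewrite /fps_x coefX; case: (i == 1%N). Qed.

Lemma agree_y N : agree N fps_y ('X%:P).
Proof. by move=> i _; rewrite /fps_y coefC. Qed.

Lemma agree_add N f g p q : agree N f p -> agree N g q ->
  agree N (fps_add f g) (p + q).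
Proof. by move=> hf hg i hi; rewrite /fps_add coefD hf // hg. Qed.

Lemma agree_scale N c f p : agree N f p ->
  agree N (fps_scale c f) ((c%:P)%:P * p).
Proof. by move=> hf i hi; rewrite /fps_scale coefCM hf. Qed.

Lemma agree_mul N f g p q : agree N f p -> agree N g q ->
  agree N (fps_mul f g) (p * q).
Proof.
move=> hf hg i hi; rewrite /fps_mul coefM; apply: eq_bigr => j _.
have hj := ltn_ord j.
rewrite hf; last by lia.
by rewrite hg //; lia.
Qed.

Lemma agree_pow N f p m : agree N f p -> agree N (fps_pow f m) (p ^+ m).
Proof.
move=> hf; elim: m => [|m IH] /=; first exact: agree_one.
by rewrite exprS; apply: agree_mul.
Qed.

Lemma pow_low F m n : F 0%N = 0 -> (n < m)%N -> fps_pow F m n = 0.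
Proof.
move=> F0; elim: m n => [//|m IH] n hn /=.
rewrite /fps_mul big1 // => j _.
case: j => [[|j'] hj] /=; first by rewrite F0 mul0r.
by rewrite IH ?mulr0 //; lia.
Qed.

Lemma agree_comp N a F P : F 0%N = 0 -> agree N F P ->
  agree N (fps_comp a F) (\sum_(m < N.+1) ((a m)%:P)%:P * P ^+ m).
Proof.
move=> F0 hF i hi; rewrite /fps_comp coef_sum.
rewrite -(big_mkord (fun _ => true) (fun m => (((a m)%:P)%:P * P ^+ m)`_i)).
rewrite -(big_mkord (fun _ => true) (fun m => (a m)%:P * fps_pow F m i)).
rewrite [RHS](big_cat_nat _ (n := i.+1)) //=.
rewrite [X in _ = _ + X]big1_seq ?addr0; last first.
  move=> m; rewrite mem_index_iota => hm.
  rewrite coefCM -(agree_pow m hF) //.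
  by rewrite pow_low ?mulr0 //; lia.
rewrite !big_mkord; apply: eq_bigr => m _.
have hm := ltn_ord m.
by rewrite coefCM -(agree_pow m hF).
Qed.

Lemma if0C (b : bool) (x : rat) : (if b then 0 else x%:P) = (if b then 0 else x)%:P.
Proof. by case: b; rewrite ?polyC0. Qed.

Lemma inner_term n m j k : (m <= n)%N -> (j <= m)%N ->
  (((('X ^+ (m - j) * ('X%:P) ^+ j) *+ 'C(m, j)) * geoP ((2:rat)%:P) n ^+ (m + m).+1)`_(n - m))`_k
  = if j == k then (if (n - m < m - j)%N then 0 else (2:rat) ^+ (n - m - (m - j)) *+
     'C(m + m + (n - m - (m - j)), m + m)) *+ 'C(m, j) else 0.
Proof.
move=> hmn hjm.
rewrite mulrnAl coefMn coefMn -mulrA mulrCA -polyC_exp coefCM coefXnM.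
rewrite coefXnM.
case: (ltnP k j) => hkj.
  have -> : (j == k) = false by lia.
  by rewrite mul0rn.
case: (ltnP (n - m) (m - j)) => h2.
  by rewrite coef0 mul0rn; case: (_ == _); rewrite ?mul0rn.
rewrite geoP_pow_coef; last by lia.
rewrite -polyC_exp -polyCMn coefC.
case: eqP => hkj'.
  have -> : j = k by lia.
  by rewrite eqxx.
have -> : (j == k) = false by lia.
by rewrite mul0rn.
Qed.

Lemma term_coef n m k : (m <= n)%N ->
  ((geoP ((2:rat)%:P) n * (((catalan m)%:P)%:P *
     ('X * ('X + 'X%:P) * (geoP ((2:rat)%:P) n * geoP ((2:rat)%:P) n)) ^+ m))`_n)`_k
  = catalan m * (if (k <= m)%N then (if (n - m < m - k)%N then 0 else (2:rat) ^+ (n - m - (m - k)) *+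
     'C(m + m + (n - m - (m - k)), m + m)) *+ 'C(m, k) else 0).
Proof.
move=> hmn.
set G := geoP _ n.
have -> : G * (((catalan m)%:P)%:P * ('X * ('X + 'X%:P) * (G * G)) ^+ m) =
   ((catalan m)%:P)%:P * ('X^m * (('X + 'X%:P) ^+ m * G ^+ (m + m).+1)).
  by rewrite exprS exprD !exprMn; ring.
rewrite coefCM coefCM coefXnM ltnNge hmn /=; congr (_ * _).
rewrite exprDn mulr_suml !coef_sum.
rewrite (eq_bigr (fun j : 'I_m.+1 => if (j : nat) == k then
   (if (n - m < m - j)%N then 0 else (2:rat) ^+ (n - m - (m - j)) *+
     'C(m + m + (n - m - (m - j)), m + m)) *+ 'C(m, j) else 0)).
  by rewrite (sum_delta _ _ (fun j => (if (n - m < m - j)%N then 0 else (2:rat) ^+ (n - m - (m - j)) *+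
     'C(m + m + (n - m - (m - j)), m + m)) *+ 'C(m, j))) ltnS.
move=> j _; apply: inner_term => //.
by have := ltn_ord j; lia.
Qed.

Theorem mainTheorem3 : forall n : nat,
  borel_gf n =
  fps_mul (fps_geom (fps_scale 2 fps_x))
    (fps_comp catalan
       (fps_mul (fps_mul fps_x (fps_add fps_x fps_y))
                (fps_mul (fps_geom (fps_scale 2 fps_x))
                         (fps_geom (fps_scale 2 fps_x))))) n.
Proof.
move=> n.
have F0a : fps_scale 2 fps_x 0%N = 0 by rewrite /fps_scale /fps_x /= mulr0.
have hG : agree n (fps_geom (fps_scale 2 fps_x)) (geoP ((2:rat)%:P) n).
  move=> i hi; rewrite /fps_geom (agree_comp (fun _ => 1) F0a (agree_scale 2 (@agree_x n))) //.
  by under eq_bigr => m _ do rewrite !polyC1 mul1r.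
have hF := agree_mul (agree_mul (@agree_x n) (agree_add (@agree_x n) (@agree_y n))) (agree_mul hG hG).
have F0 : fps_mul (fps_mul fps_x (fps_add fps_x fps_y))
             (fps_mul (fps_geom (fps_scale 2 fps_x)) (fps_geom (fps_scale 2 fps_x))) 0%N = 0.
  by rewrite /fps_mul !big_ord1 /fps_x /= !mul0r.
rewrite (agree_mul hG (agree_comp catalan F0 hF)) //.
apply/polyP => k.
rewrite mulr_sumr [in RHS]coef_sum [in RHS]coef_sum.
rewrite [in RHS](eq_bigr (fun m : 'I_n.+1 => catalan m * (if (k <= m)%N then (if (n - m < m - k)%N then 0 else (2:rat) ^+ (n - m - (m - k)) *+
     'C(m + m + (n - m - (m - k)), m + m)) *+ 'C(m, k) else 0))); last first.
  by move=> m _; apply: term_coef; have := ltn_ord m; lia.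
rewrite -borel_id /borel_gf coef_sum.
under eq_bigr => i _ do rewrite coefCM coefXn mulr_natr mulrb eq_sym.
rewrite (sum_delta _ _ (fun i => borel n i)) ltnS.
by rewrite /borel; case: leqP.
Qed.
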